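(* Let $p$ be an odd prime, $m\ge 3$ odd, $k\ge1$ with $\gcd(m,k)=1$, $\pi$ a primitive element of $\mathbb{F}_{p^m}$, $\zeta_p=e^{2\pi i/p}$, and $\lambda$ a fixed nonsquare in $\mathbb{F}_p$. For $a,b,c\in\mathbb{F}_{p^m}$, with $\mathbf{c}_{(a,b,c)}$ as defined in the context, the Hamming weight satisfies $$W(\mathbf{c}_{(a,b,c)})=p^m-p^{m-1}-\frac{1}{2p}\sum_{y\in\mathbb{F}_p^*}\sum_{x\in\mathbb{F}_{p^m}}\Big(\zeta_p^{y\,\mathrm{Tr}((a+b)x^2+cx^{p^k+1})}+\zeta_p^{y\,\mathrm{Tr}((a-b)\lambda x^2+\varepsilon c\lambda x^{p^k+1})}\Big),$$ where $\varepsilon=1$ if $k$ is even and $\varepsilon=-1$ if $k$ is odd.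
   Context: $\mathrm{Tr}$ is the trace map from $\mathbb{F}_{p^m}$ to $\mathbb{F}_p$. $\mathbf{c}_{(a,b,c)}=\big(\mathrm{Tr}(a\pi^{t}+b(-\pi)^{t}+c\,\pi^{(p^{k}+1)t/2})\big)_{t=0}^{p^{m}-2}$, and $W$ denotes Hamming weight (number of nonzero coordinates). *)

(* Defs.v *)
From HB Require Import structures.
From mathcomp Require Import all_boot all_order all_algebra all_field.
Set Implicit Arguments. Unset Strict Implicit. Unset Printing Implicit Defensive.
Import Order.TTheory GRing.Theory Num.Theory.
Local Open Scope ring_scope.

(* Absolute trace Tr : F_{p^m} -> F_p, valued in the prime subfield of F. *)
Definition Tr (F : finFieldType) (p m : nat) (x : F) : F :=
  \sum_(i < m) x ^+ (p ^ i).

(* The integer representative in {0,...,p-1} of an element of the prime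
   subfield F_p of F (0 if the element is not in the prime subfield). *)
Definition fp_nat (F : finFieldType) (p : nat) (t : F) : nat :=
  if [pick n : 'I_p | (val n)%:R == t] is Some n then val n else 0%N.

(* zeta ^ t for t in the prime field F_p (viewed inside F). *)
Definition zpow (F : finFieldType) (p : nat) (z : algC) (t : F) : algC :=
  z ^+ fp_nat p t.

(* The codeword c_(a,b,c), coordinate t, 0 <= t <= p^m - 2. *)
Definition cw (F : finFieldType) (p m k : nat) (pi a b c : F) (t : nat) : F :=
  Tr p m (a * pi ^+ t + b * (- pi) ^+ t + c * pi ^+ (((p ^ k).+1 %/ 2) * t)).

Definition Wt (F : finFieldType) (p m k : nat) (pi a b c : F) : nat :=
  #|[set t : 'I_(p ^ m).-1 | cw p m k pi a b c (val t) != 0]|.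

(* Main.v *)
Require Import Defs.
From HB Require Import structures.
From mathcomp Require Import all_boot all_order all_algebra all_field.
From mathcomp Require Import ring zify.
Import Order.TTheory GRing.Theory Num.Theory.
Set Implicit Arguments. Unset Strict Implicit. Unset Printing Implicit Defensive.
Local Open Scope ring_scope.

Section PrimeField.
Variables (F : finFieldType) (p : nat).
Hypothesis hp : prime p.
Hypothesis hchar : p \in [pchar F].

Lemma natF_inj i j : (i < p)%N -> (j < p)%N -> (i%:R == j%:R :> F) = (i == j).
Proof.
wlog le: i j / (i <= j)%N.
  move=> H hi hj; case: (leqP i j) => h; first exact: H.
  by rewrite eq_sym [(i == j)]eq_sym; apply: H => //; apply: ltnW.
move=> hi hj; rewrite eq_sym -subr_eq0 -natrB // -(dvdn_pcharf hchar).
apply/idP/idP => [H|/eqP->]; last by rewrite subnn dvdn0.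
case: (posnP (j - i)) => h0; first by apply/eqP; lia.
have := dvdn_leq h0 H; lia.
Qed.

Lemma fp_nat_nat n : (n < p)%N -> fp_nat p (n%:R : F) = n.
Proof.
move=> hn; rewrite /fp_nat; case: pickP => [x /eqP hx | H].
  by apply/eqP; rewrite -natF_inj ?ltn_ord //; apply/eqP.
by have := H (Ordinal hn); rewrite eqxx.
Qed.

Lemma natF_frob n : (n%:R : F) ^+ p = n%:R.
Proof. by rewrite -(pFrobenius_autE hchar) pFrobenius_aut_nat. Qed.

Lemma fixed_nat (z : F) : z ^+ p = z -> exists2 n, (n < p)%N & z = n%:R.
Proof.
move=> hz.
case/boolP: (z \in [seq (i%:R : F) | i <- iota 0 p]).
  by case/mapP => i; rewrite mem_iota add0n => /andP[_ hi] ->; exists i.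
move=> hn; exfalso.
have p1 := prime_gt1 hp.
set P : {poly F} := 'X^p - 'X.
have Pn0 : P != 0.
  by rewrite /P subr_eq0; apply/eqP => /(congr1 (size : {poly F} -> nat));
    rewrite size_polyXn size_polyX; lia.
have szP : size P = p.+1 by rewrite /P size_polyDl ?size_polyN size_polyXn ?size_polyX.
have Hall : all (root P) (z :: [seq (i%:R : F) | i <- iota 0 p]).
  apply/andP; split.
    by rewrite /root /P !hornerE hz subrr.
  apply/allP => x /mapP [i _ ->].
  by rewrite /root /P !hornerE natF_frob subrr.
have Hu : uniq (z :: [seq (i%:R : F) | i <- iota 0 p]).
  rewrite /= hn /= map_inj_in_uniq ?iota_uniq //.
  by move=> i j; rewrite !mem_iota !add0n => /andP[_ hi] /andP[_ hj] /eqP;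
    rewrite natF_inj // => /eqP.
have := max_poly_roots Pn0 Hall Hu.
by rewrite szP /= size_map size_iota ltnn.
Qed.

Lemma zsum (z : F) (zeta : algC) : p.-primitive_root zeta -> z ^+ p = z ->
  \sum_(1 <= y < p) zpow p zeta (y%:R * z) = if z == 0 then (p.-1)%:R else -1.
Proof.
move=> hz hzp; have [n hn ->] := fixed_nat hzp.
have p1 := prime_gt1 hp.
have E y : zpow p zeta (y%:R * n%:R : F) = (zeta ^+ n) ^+ y.
  rewrite /zpow -natrM -(GRing.natr_mod_pchar hchar) fp_nat_nat ?ltn_mod ?prime_gt0 //.
  by rewrite (prim_expr_mod hz) -exprM mulnC.
under eq_bigr do rewrite E.
case: (posnP n) => [->|n0].
  rewrite eqxx expr0 (eq_bigr (fun _ => 1)) ?sumr_const_nat; last by move=> *; rewrite expr1n.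
  by rewrite -[in RHS](prednK (prime_gt0 hp)) subn1.
have -> : (n%:R == 0 :> F) = false.
  by apply/negbTE; rewrite -[0 : F]/(0%:R) (natF_inj hn (prime_gt0 hp)); lia.
have w1 : zeta ^+ n != 1.
  by rewrite -(expr0 zeta) (eq_prim_root_expr hz) mod0n modn_small //; lia.
have ws : \sum_(0 <= y < p) (zeta ^+ n) ^+ y = 0.
  rewrite big_mkord; apply/eqP.
  have wp : (zeta ^+ n) ^+ p = 1 by rewrite -exprM mulnC exprM (prim_expr_order hz) expr1n.
  have := subrX1 (zeta ^+ n) p; rewrite wp subrr => /esym/eqP.
  by rewrite mulf_eq0 subr_eq0 (negbTE w1).
move: ws; rewrite (big_ltn (m:=0)) ?prime_gt0 // expr0 => /eqP.
by rewrite addrC addr_eq0 => /eqP.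
Qed.

Lemma Tr_fix (m : nat) (hcard : #|F| = (p ^ m)%N) (x : F) : Tr p m x ^+ p = Tr p m x.
Proof.
rewrite /Tr -(pFrobenius_autE hchar) rmorph_sum.
under eq_bigr do rewrite /= pFrobenius_autE -exprM -expnSr.
have H2 : \sum_(i < m.+1) x ^+ (p ^ i) = x + \sum_(i < m) x ^+ (p ^ i.+1).
  by rewrite big_ord_recl expn0 expr1.
have H1 : \sum_(i < m.+1) x ^+ (p ^ i) = \sum_(i < m) x ^+ (p ^ i) + x.
  by rewrite big_ord_recr /= -hcard expf_card.
by move: H1; rewrite H2 addrC => /addIr.
Qed.

End PrimeField.
Lemma odd_geo (p k : nat) : odd p -> odd (\sum_(i < k) p ^ i)%N = odd k.
Proof.
move=> hp; elim: k => [|k IH]; first by rewrite big_ord0.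
by rewrite big_ord_recr /= oddD IH oddX hp orbT addbT.
Qed.

Lemma card_sum (T : finType) (P : pred T) : #|[set x | P x]| = (\sum_x P x)%N.
Proof.
rewrite -sum1_card big_mkcond; apply: eq_bigr => x _; rewrite inE.
by case: (P x).
Qed.

Lemma pair_sum (f : nat -> nat) (n : nat) : (forall t, f (t + n)%N = f t) ->
  (2 * \sum_(0 <= t < n) f t = \sum_(0 <= s < n) (f (2 * s) + f (2 * s).+1))%N.
Proof.
move=> per.
have A : forall r, (\sum_(0 <= s < r) (f (2 * s) + f (2 * s).+1) = \sum_(0 <= t < 2 * r) f t)%N.
  elim=> [|r IH]; first by rewrite !big_geq.
  rewrite big_nat_recr //= IH mulnS !add2n big_nat_recr //= big_nat_recr //=.
  by rewrite addnA.
rewrite A mul2n -!addnn [in RHS](@big_cat_nat _ _ _ n) ?leq_addr //=.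
f_equal.
rewrite -[in RHS](add0n n) big_addn !add0n.
have -> : (2 * n - n = n)%N by lia.
by apply: eq_bigr => t _; rewrite per.
Qed.

Section Cyc.
Variables (F : finFieldType) (pi : F).
Hypothesis hpi : #|F|.-1.-primitive_root pi.

Lemma nz_pow (x : F) : x != 0 -> x ^+ #|F|.-1 = 1.
Proof.
move=> x0; have c0 : (0 < #|F|)%N by apply/card_gt0P; exists 0.
have := expf_card x; rewrite -{1}(prednK c0) exprS.
by rewrite -[X in _ = X]mulr1 => /(mulfI x0).
Qed.

Lemma pi_neq0 : pi != 0.
Proof.
apply/eqP => h; have := prim_expr_order hpi; rewrite h expr0n.
by rewrite gtn_eqF ?(prim_order_gt0 hpi) //= => /eqP; rewrite eq_sym oner_eq0.
Qed.

Lemma sum_units (g : F -> nat) :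
  (\sum_(x : F | x != 0%R) g x = \sum_(s < #|F|.-1) g (pi ^+ s))%N.
Proof.
have inj : {in [set: 'I_#|F|.-1] &, injective (fun s : 'I_#|F|.-1 => pi ^+ s)}.
  move=> i j _ _ /eqP; rewrite (eq_prim_root_expr hpi) !modn_small // => /eqP.
  exact: val_inj.
rewrite (eq_bigr _ (fun _ _ => erefl)) [RHS](eq_bigl (fun s => s \in [set: _])); last by move=> s; rewrite inE.
rewrite -(big_imset _ inj); apply: eq_bigl => x.
apply/idP/imsetP => [x0 | [s _ ->]]; last exact: expf_neq0 pi_neq0.
by have [i ->] := prim_rootP hpi (nz_pow x0); exists i.
Qed.

End Cyc.

Lemma lam_facts (F : finFieldType) (p m k : nat) (hp : prime p) (hpodd : odd p)
  (hmodd : odd m) (hchar : p \in [pchar F]) (hcard : #|F| = (p ^ m)%N)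
  (pi : F) (hpi : (p ^ m).-1.-primitive_root pi)
  (lam : nat) (hlam0 : (0 < lam < p)%N)
  (hlam : forall n : nat, ((n * n) %% p)%N != lam) :
  exists u : F, pi = lam%:R * u ^+ 2 /\
    (lam%:R : F) ^+ ((p ^ k).+1 %/ 2) = (-1) ^+ k * lam%:R.
Proof.
set n := (p ^ m).-1.
set L : F := lam%:R.
have hlp : (lam < p)%N by case/andP: hlam0.
have hp0 := prime_gt0 hp.
have p3 : (3 <= p)%N.
  have := prime_gt1 hp; move: hpodd; clear; case: p => [|[|[|]]] //.
have pm3 : (3 <= p ^ m)%N.
  apply: leq_trans p3 _; rewrite -{1}(expn1 p) leq_pexp2l ?(prime_gt0 hp) //; lia.
have hpi' : #|F|.-1.-primitive_root pi by rewrite hcard.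
have L0 : L != 0.
  rewrite /L -(dvdn_pcharf hchar); apply/negP => /(dvdn_leq _); lia.
have Lp : L ^+ p = L by rewrite natF_frob.
have two0 : (2%:R : F) != 0.
  rewrite -(dvdn_pcharf hchar); apply/negP => /(dvdn_leq _) /=; lia.
have m1 : (-1 : F) != 1.
  apply/eqP => h; move: two0; rewrite -[2%N]/(1 + 1)%N natrD -{1}h addNr eqxx //.
have nonsq : forall w : F, w ^+ 2 != L.
  move=> w; apply/eqP => hw.
  have w2 : (w ^+ p) ^+ 2 = w ^+ 2 by rewrite exprAC hw Lp.
  move/eqP: w2; rewrite -subr_eq0 subr_sqr mulf_eq0 !subr_eq0 addr_eq0 => /orP [] /eqP wp.
    have [n0 hn0 wn] := fixed_nat hp hchar wp.
    move: hw; rewrite wn -natrX -(GRing.natr_mod_pchar hchar) => /eqP.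
    rewrite /L (natF_inj hp hchar) ?ltn_mod // => /eqP h.
    by move: (hlam n0); rewrite mulnn h eqxx.
  have wi : forall i, w ^+ (p ^ i) = (-1) ^+ i * w.
    elim=> [|i IH]; first by rewrite expr0 mul1r expr1.
    rewrite expnSr exprM IH exprMn wp -exprM mulnC exprM -(signr_odd _ p) hpodd expr1.
    rewrite exprS; ring.
  have := wi m; rewrite -hcard expf_card -(signr_odd _ m) hmodd expr1 mulN1r.
  move/eqP; rewrite -addr_eq0 -mulr2n -mulr_natr mulf_eq0 (negbTE two0) orbF => /eqP w0.
  by move: hw; rewrite w0 expr0n /= => /eqP; rewrite eq_sym (negbTE L0).
have nE : #|F|.-1 = n by rewrite hcard.
have [j hj] := prim_rootP hpi' (nz_pow L0).
rewrite nE in j hj *.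
have jn : (j < n)%N := ltn_ord j.
have nodd : odd n = false.
  have : odd (p ^ m) by rewrite oddX hpodd orbT.
  rewrite /n; case: (p ^ m)%N => //= q; by case: (odd q).
have jodd : odd j.
  case/boolP: (odd j) => // je; have := nonsq (pi ^+ (j./2)).
  rewrite -exprM hj; have -> : (j./2 * 2 = j)%N by clear -je; lia.
  by rewrite eqxx.
exists (pi ^+ ((n.+1 - j)./2)); split.
  rewrite -exprM hj -exprD.
  have -> : (j + (n.+1 - j)./2 * 2 = n.+1)%N by clear -jodd nodd jn; lia.
  by rewrite exprS (prim_expr_order hpi) mulr1.
have pih : pi ^+ n./2 = -1.
  have : (pi ^+ n./2) ^+ 2 == 1.
    rewrite -exprM; have -> : (n./2 * 2 = n)%N by clear -nodd; lia.
    by rewrite (prim_expr_order hpi).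
  rewrite sqrf_eq1 => /orP [] /eqP // h1.
  move/eqP: h1; rewrite -(expr0 pi) (eq_prim_root_expr hpi) mod0n modn_small; rewrite /n; clear -pm3; lia.
have Lh : L ^+ n./2 = -1.
  by rewrite hj -exprM mulnC exprM pih -signr_odd jodd expr1.
set h1 := (p.-1)./2.
set z := L ^+ h1.
have z2 : z ^+ 2 = 1.
  rewrite -exprM; have -> : (h1 * 2 = p.-1)%N by rewrite /h1; move: (p) hpodd hp0; clear; lia.
  apply: (mulfI L0); rewrite mulr1 -exprS prednK //.
have nS : n./2 = (h1 * \sum_(i < m) p ^ i)%N.
  rewrite /n predn_exp /h1.
  have e : p.-1 = (h1 * 2)%N by rewrite /h1; move: (p) hpodd hp0; clear; lia.
  by rewrite {1}e mulnAC muln2 doubleK.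
have zm1 : z = -1.
  move/eqP: z2; rewrite sqrf_eq1 => /orP [] /eqP // z1.
  move: Lh; rewrite nS exprM -/z z1 expr1n => /eqP; rewrite eq_sym (negbTE m1) //.
have eE : ((p ^ k).+1 %/ 2 = h1 * \sum_(i < k) p ^ i + 1)%N.
  have pk0 : (0 < p ^ k)%N by rewrite expn_gt0 hp0.
  rewrite -(prednK pk0) predn_exp.
  have e : p.-1 = (h1 * 2)%N by rewrite /h1; move: (p) hpodd hp0; clear; lia.
  rewrite e; move: (\sum_(i < k) p ^ i)%N => S.
  have -> : ((h1 * 2 * S).+1.+1 = (h1 * S + 1) * 2)%N by move: (h1) S; clear; nia.
  by rewrite mulnK.
rewrite eE exprD exprM -/z zm1 expr1; congr (_ * _).
by rewrite -[in RHS]signr_odd -(odd_geo k hpodd) signr_odd.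
Qed.

Lemma sumif (F : finFieldType) (p : nat) (T : F -> F) : (0 < p)%N ->
  \sum_(x : F) (if T x == 0 then (p.-1)%:R else -1 : algC) =
  (p * \sum_(x : F) (T x == 0%R : nat))%N%:R - #|F|%:R.
Proof.
move=> hp0.
rewrite (eq_bigr (fun x => (p * (T x == 0%R : nat))%N%:R - 1)); last first.
  by move=> x _; case: (T x == 0); rewrite ?muln1 ?muln0 ?sub0r // -subn1 natrB.
rewrite sumrB big_distrr natr_sum /=; congr (_ - _).
by rewrite -sum1_card natr_sum.
Qed.


Lemma Tr0 (F : finFieldType) (p m : nat) : (0 < p)%N -> Tr p m (0 : F) = 0.
Proof.
move=> hp0; rewrite /Tr big1 // => i _.
by rewrite expr0n expn_eq0 gtn_eqF.
Qed.
Lemma final_nat (W N1 N2 p q : nat) : (0 < p)%N ->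
  (2 * W + N1 + N2 = 2 * (p * q))%N ->
  (W%:R : algC) = (p * q)%N%:R - q%:R - ((2 * p)%:R)^-1 *
     ((p * N1)%N%:R - (p * q)%N%:R + ((p * N2)%N%:R - (p * q)%N%:R)).
Proof.
move=> hp0 key.
have -> : ((2 * p)%:R : algC) = 2 * p%:R by rewrite -natrM.
have P0 : (p%:R : algC) != 0 by rewrite pnatr_eq0 -lt0n.
have key' : (W%:R + W%:R + N1%:R + N2%:R : algC) = (p * q)%N%:R + (p * q)%N%:R.
  by rewrite -!natrD; congr (_%:R); lia.
have -> : (W%:R : algC) = ((p * q)%N%:R + (p * q)%N%:R - N1%:R - N2%:R) / 2.
  by rewrite -key'; field.
rewrite !natrM; field; exact: P0.
Qed.

Unset Implicit Arguments.

Theorem mainTheorem2 (p m k : nat) (F : finFieldType)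
  (hp : prime p) (hpodd : odd p)
  (hm3 : (3 <= m)%N) (hmodd : odd m) (hk : (1 <= k)%N) (hmk : coprime m k)
  (hchar : p \in [pchar F]) (hcard : #|F| = (p ^ m)%N)
  (pi : F) (hpi : (p ^ m).-1.-primitive_root pi)
  (zeta : algC) (hzeta : p.-primitive_root zeta)
  (lam : nat) (hlam0 : (0 < lam < p)%N)
  (hlam : forall n : nat, ((n * n) %% p)%N != lam)
  (a b c : F) :
  let eps : F := (-1) ^+ k in
  let lamF : F := lam%:R in
  (Wt p m k pi a b c)%:R =
    (p ^ m)%:R - (p ^ m.-1)%:R
    - ((2 * p)%:R)^-1 *
      \sum_(1 <= y < p) \sum_(x : F)
        ( zpow p zeta (y%:R * Tr p m ((a + b) * x ^+ 2 + c * x ^+ (p ^ k).+1))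
        + zpow p zeta (y%:R * Tr p m ((a - b) * lamF * x ^+ 2
                                     + eps * c * lamF * x ^+ (p ^ k).+1)))
    :> algC.
Proof.
move=> eps lamF.
have [u [hu hL]] := lam_facts k hp hpodd hmodd hchar hcard hpi hlam0 hlam.
rewrite -/lamF -/eps in hu hL.
set T1 := fun x : F => Tr p m ((a + b) * x ^+ 2 + c * x ^+ (p ^ k).+1).
set T2 := fun x : F => Tr p m ((a - b) * lamF * x ^+ 2 + eps * c * lamF * x ^+ (p ^ k).+1).
have hp0 := prime_gt0 hp.
have -> : \sum_(1 <= y < p) \sum_(x : F)
        ( zpow p zeta (y%:R * T1 x) + zpow p zeta (y%:R * T2 x)) =
   ((p * \sum_(x : F) (T1 x == 0%R : nat))%N%:R - #|F|%:R)
   + ((p * \sum_(x : F) (T2 x == 0%R : nat))%N%:R - #|F|%:R).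
  rewrite exchange_big /= -!sumif //= -big_split /=; apply: eq_bigr => x _.
  by rewrite big_split /= !zsum // Tr_fix.
have [e eE] : exists e, ((p ^ k).+1 %/ 2)%N = e by eexists.
rewrite eE in hL.
have pm0 : (0 < p ^ m)%N by rewrite expn_gt0 hp0.
have [n qn] : exists n, (p ^ m)%N = n.+1 by exists (p ^ m).-1; rewrite prednK.
have hpin : n.-primitive_root pi by move: hpi; rewrite qn.
have neven : odd n = false.
  have : odd (p ^ m) by rewrite oddX hpodd orbT.
  by rewrite qn /= => /negbTE.
have e2 : (e * 2 = (p ^ k).+1)%N.
  have : odd (p ^ k) by rewrite oddX hpodd orbT.
  rewrite -eE; move: (p ^ k)%N => r hr; clear -hr; lia.
have cwE : forall t, cw p m k pi a b c t =
   Tr p m (a * pi ^+ t + b * (- pi) ^+ t + c * pi ^+ (e * t)) by rewrite /cw eE.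
have piN : pi ^+ n = 1 := prim_expr_order hpin.
have mpN : (- pi) ^+ n = 1.
  by rewrite -mulN1r exprMn piN mulr1 -signr_odd neven.
have per : forall t, cw p m k pi a b c (t + n)%N = cw p m k pi a b c t.
  move=> t; rewrite !cwE !exprD.
  rewrite (_ : pi ^+ n = 1); last exact: piN.
  rewrite (_ : (- pi) ^+ n = 1); last exact: mpN.
  rewrite !mulr1 mulnDr exprD (mulnC e n) (exprM pi n e).
  rewrite (_ : pi ^+ n = 1); last exact: piN.
  by rewrite expr1n mulr1.
have Tr0' : Tr p m (0 : F) = 0 := Tr0 _ m hp0.
have ev : forall s : nat, cw p m k pi a b c (2 * s)%N = T1 (pi ^+ s).
  move=> s; rewrite cwE /T1; congr (Tr p m _).
  have E1 : pi ^+ (2 * s)%N = (pi ^+ s) ^+ 2 by rewrite mulnC exprM.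
  have E2 : (- pi) ^+ (2 * s)%N = (pi ^+ s) ^+ 2 by rewrite exprM sqrrN -(exprM pi 2 s) E1.
  have E3 : pi ^+ (e * (2 * s))%N = (pi ^+ s) ^+ (p ^ k).+1.
    by rewrite mulnA e2 mulnC exprM.
  rewrite E1 E2 E3; ring.
have od : forall s : nat, cw p m k pi a b c (2 * s)%N.+1 = T2 (u * pi ^+ s).
  move=> s; rewrite cwE /T2; congr (Tr p m _).
  have -> : (e * (2 * s).+1 = e + s * (p ^ k).+1)%N by rewrite -e2; lia.
  have E1 : pi ^+ (2 * s)%N.+1 = pi * (pi ^+ s) ^+ 2 by rewrite exprS mulnC exprM.
  have E2 : (- pi) ^+ (2 * s)%N.+1 = - (pi * (pi ^+ s) ^+ 2).
    by rewrite exprS exprM sqrrN -exprM mulnC exprM mulNr.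
  have E3 : pi ^+ (e + s * (p ^ k).+1)%N = pi ^+ e * (pi ^+ s) ^+ (p ^ k).+1.
    by rewrite exprD exprM.
  have E4 : pi ^+ e = eps * lamF * u ^+ (p ^ k).+1.
    by rewrite hu exprMn hL -exprM mulnC e2.
  rewrite E1 E2 E3 E4; move: (pi ^+ s) => X; rewrite hu !exprMn.
  move: (u ^+ (p ^ k).+1) (X ^+ (p ^ k).+1) => U V; ring.
have hpi' : #|F|.-1.-primitive_root pi by rewrite hcard.
have u0 : u != 0.
  apply/eqP => u0; move: hu; rewrite u0 expr0n mulr0 => pi0.
  by move: (pi_neq0 hpi'); rewrite pi0 eqxx.
set f := fun t => (cw p m k pi a b c t == 0%R : nat).
have hW : Wt p m k pi a b c = (\sum_(0 <= t < n) (cw p m k pi a b c t != 0%R : nat))%N.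
  rewrite /Wt card_sum -(big_mkord xpredT (fun t => (cw p m k pi a b c t != 0%R : nat))).
  by rewrite qn.
have hWZ : (Wt p m k pi a b c + \sum_(0 <= t < n) f t = n)%N.
  rewrite hW -big_split /= (eq_bigr (fun _ => 1%N)); last first.
    by move=> t _; rewrite /f; case: (cw _ _ _ _ _ _ _ t == 0).
  by rewrite sum_nat_const_nat subn0 muln1.
have hZ := pair_sum (f := f) (n := n) (fun t => congr1 (fun x => (x == 0%R : nat)) (per t)).
have T10 : T1 0 = 0.
  rewrite /T1 /= -[RHS]Tr0'; congr (Tr p m _); rewrite !expr0n /=; ring.
have T20 : T2 0 = 0.
  rewrite /T2 /= -[RHS]Tr0'; congr (Tr p m _); rewrite !expr0n /=; ring.
have S1 : (\sum_(x : F | x != 0%R) (T1 x == 0%R : nat) = \sum_(0 <= s < n) f (2 * s)%N)%N.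
  have := sum_units hpi' (fun x => (T1 x == 0%R : nat)); rewrite /= => ->.
  rewrite -(big_mkord xpredT (fun s => (T1 (pi ^+ s) == 0%R : nat))) hcard qn /=.
  by apply: eq_bigr => s _; rewrite /f ev.
have S2 : (\sum_(x : F | x != 0%R) (T2 x == 0%R : nat) = \sum_(0 <= s < n) f (2 * s)%N.+1)%N.
  rewrite (reindex_inj (mulfI u0)) /=.
  rewrite (eq_bigl (fun x : F => x != 0%R)); last by move=> x; rewrite mulf_eq0 (negbTE u0).
  have := sum_units hpi' (fun x => (T2 (u * x) == 0%R : nat)); rewrite /= => ->.
  rewrite -(big_mkord xpredT (fun s => (T2 (u * pi ^+ s) == 0%R : nat))) hcard qn /=.
  by apply: eq_bigr => s _; rewrite /f od.
have hE : (\sum_(0 <= s < n) f (2 * s)%N + 1 = \sum_(x : F) (T1 x == 0%R : nat))%N.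
  by rewrite (bigD1 (0 : F)) //= T10 eqxx -S1 addnC.
have hO : (\sum_(0 <= s < n) f (2 * s)%N.+1 + 1 = \sum_(x : F) (T2 x == 0%R : nat))%N.
  by rewrite (bigD1 (0 : F)) //= T20 eqxx -S2 addnC.
have key : (2 * Wt p m k pi a b c + \sum_(x : F) (T1 x == 0%R : nat)
     + \sum_(x : F) (T2 x == 0%R : nat) = 2 * (p ^ m))%N.
  rewrite -hE -hO qn; have hZ' := hZ; rewrite big_split /= in hZ'.
  clear -hWZ hZ'; lia.
have pm : (p ^ m = p * p ^ m.-1)%N by rewrite -expnS prednK //; lia.
rewrite hcard pm; rewrite pm in key.
exact: final_nat hp0 key.
Qed.
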